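(* Let $\Omega\subset\mathbb{R}^d$, $T_{\text{final}}>0$, and let $s=(s_1,\dots,s_{d_s})^\top$, $s_j:\Omega\times[0,T_{\text{final}})\to\mathcal{S}_j\subset\mathbb{R}$, be a (sufficiently smooth) solution of the nonlinear PDE $\partial s/\partial t=f(s)$, where $f=(f_1,\dots,f_{d_s})^\top$ is a differentiable nonlinear function (possibly involving spatial derivatives of $s$); write $\mathcal{S}=\mathcal{S}_1\times\cdots\times\mathcal{S}_{d_s}$. Let $\mathcal{T}:\mathcal{S}\to\mathcal{W}\subset\mathbb{R}^{d_w}$ be a quadratic lifting with Jacobian $\mathcal{J}$ and $\mathcal{T}^\dagger$ a reverse lifting map (definitions in context), so that $w=\mathcal{T}(s)$ satisfies $\partial w/\partial t=a(w)+h(w)$. Let $x_1,\dots,x_n\in\Omega$ be grid points, $\bar{\mathbf{s}}(t)\in\mathbb{R}^{nd_s}$ the vector with entries $\bar{\mathbf{s}}_{(j-1)n+l}(t)=s_j(x_l,t)$, and $\bar{\mathbf{w}}(t)=\mathbf{T}(\bar{\mathbf{s}}(t))$. Suppose that $\frac{d\mathbf{s}}{dt}=\mathbf{f}(\mathbf{s})$ (with $\mathbf{f}$ Lipschitz) is a consistent order-$p$ discretization of $\partial s/\partial t=f(s)$ and that $\frac{d\mathbf{w}}{dt}=\mathbf{A}\mathbf{w}+\mathbf{H}(\mathbf{w}\otimes\mathbf{w})$, with $\mathbf{A}\in\mathbb{R}^{nd_w\times nd_w}$, $\mathbf{H}\in\mathbb{R}^{nd_w\times n^2d_w^2}$, is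 a consistent order-$p$ discretization of $\partial w/\partial t=a(w)+h(w)$ (definitions in context). Then there is a constant $C$ independent of $n$ such that for all $t$, $$\left\|\mathbf{A}\bar{\mathbf{w}}+\mathbf{H}(\bar{\mathbf{w}}\otimes\bar{\mathbf{w}})-\mathbf{J}(\mathbf{T}^\dagger(\bar{\mathbf{w}}))\,\mathbf{f}(\mathbf{T}^\dagger(\bar{\mathbf{w}}))\right\|_2\le C\, n^{\frac12-p}.$$
   Context: Quadratic lifting: a map $\mathcal{T}:\mathcal{S}\to\mathcal{W}\subset\mathbb{R}^{d_w}$, $d_w\ge d_s$, differentiable in $s$ with Jacobian $\mathcal{J}(s)$ satisfying $\sup_{s\in\mathcal{S}}\|\mathcal{J}(s)\|\le c$ for some $c>0$, such that the lifted state $w(x,t)=\mathcal{T}(s(x,t))$ satisfies $\partial w/\partial t=a(w)+h(w)$ with $a=(a_1,\dots,a_{d_w})^\top$, $h=(h_1,\dots,h_{d_w})^\top$, each $a_j$ linear and each $h_j$ quadratic (these operators may involve spatial derivatives). Reverse lifting map: a map $\mathcal{T}^\dagger:\mathcal{W}\to\mathcal{S}$, differentiable with bounded derivative on $\mathcal{W}$, with $\mathcal{T}^\dagger(\mathcal{T}(s))=s$ for all $s\in\mathcal{S}$. Discrete maps: $\mathbf{T}:\mathbb{R}^{nd_s}\to\mathbb{R}^{nd_w}$ applies $\mathcal{T}$ node-wise, i.e. its $((j-1)n+l)$-th output is $\mathcal{T}_j$ applied to the $d_s$ state values at node $x_l$; $\mathbf{J}(\mathbf{s})\in\mathbb{R}^{nd_w\times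 nd_s}$ is the Jacobian of $\mathbf{T}$; $\mathbf{T}^\dagger$ applies $\mathcal{T}^\dagger$ node-wise. The semi-discrete model $\frac{d\mathbf{s}}{dt}=\mathbf{f}(\mathbf{s})$, $\mathbf{f}:\mathcal{S}^n\to\mathcal{S}^n$ Lipschitz, is a consistent order-$p$ discretization if there is $c_s>0$ with $|\mathbf{f}_{(j-1)n+l}(\bar{\mathbf{s}}(t))-f_j(s(x,t))|_{x=x_l}|\le c_s n^{-p}$ for all $t$, $j=1,\dots,d_s$, $l=1,\dots,n$. The lifted discrete model is a consistent order-$p$ discretization if there is $c_w>0$ with $|\mathbf{A}_{(j-1)n+l,:}\bar{\mathbf{w}}+\mathbf{H}_{(j-1)n+l,:}(\bar{\mathbf{w}}\otimes\bar{\mathbf{w}})-(a_j(w)+h_j(w))|_{x=x_l}|\le c_w n^{-p}$ for all $t$, $j=1,\dots,d_w$, $l=1,\dots,n$, where $\mathbf{M}_{i,:}$ denotes the $i$-th row. For $\mathbf{b}=(b_1,\dots,b_m)^\top$, $\mathbf{b}\otimes\mathbf{b}=(b_1^2,b_1b_2,\dots,b_1b_m,b_2b_1,\dots,b_m^2)^\top\in\mathbb{R}^{m^2}$. *)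

(* Defs.v *)
From HB Require Import structures.
From mathcomp Require Import all_boot all_order all_algebra.
From mathcomp Require Import all_classical all_reals all_analysis.
Set Implicit Arguments. Unset Strict Implicit. Unset Printing Implicit Defensive.
Import Order.TTheory GRing.Theory Num.Theory.
Import numFieldNormedType.Exports.
Local Open Scope classical_set_scope.
Local Open Scope ring_scope.

(* ---------- index bookkeeping: entry ((j-1)n + l) (1-based) = j*n + l (0-based) ---------- *)
Lemma idx_proof (a n : nat) (j : 'I_a) (l : 'I_n) : (j * n + l < a * n)%N.
Proof.
apply: (@leq_trans (j * n + n)%N); first by rewrite ltn_add2l.
by rewrite -mulSnr leq_mul2r ltn_ord orbT.
Qed.
Definition idx (a n : nat) (j : 'I_a) (l : 'I_n) : 'I_(a * n) :=
  Ordinal (idx_proof j l).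

Lemma blk_proof (a n : nat) (k : 'I_(a * n)) : (k %/ n < a)%N.
Proof.
case: k => k /= Hk; case: n Hk => [|n] Hk; first by rewrite muln0 in Hk.
by rewrite ltn_divLR.
Qed.
Lemma nod_proof (a n : nat) (k : 'I_(a * n)) : (k %% n < n)%N.
Proof.
case: k => k /= Hk; case: n Hk => [|n] Hk; first by rewrite muln0 in Hk.
by rewrite ltn_pmod.
Qed.
Definition blk (a n : nat) (k : 'I_(a * n)) : 'I_a := Ordinal (blk_proof k).
Definition nod (a n : nat) (k : 'I_(a * n)) : 'I_n := Ordinal (nod_proof k).

Section Defs.
Variable R : realType.

Definition norm2 (p q : nat) (v : 'M[R]_(p, q)) : R :=
  Num.sqrt (\sum_(i < p) \sum_(j < q) v i j ^+ 2).

(* Kronecker square b ⊗ b = (b1^2, b1 b2, ..., b1 bm, b2 b1, ..., bm^2)^T *)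
Definition kron2 (m : nat) (b : 'cV[R]_m) : 'cV[R]_(m * m) :=
  \col_(k < m * m) (b (blk k) 0 * b (nod k) 0).

Definition node (a n : nat) (v : 'cV[R]_(a * n)) (l : 'I_n) : 'rV[R]_a :=
  \row_(j < a) v (idx j l) 0.

(* sampling of a field u : R^d -> R^a at grid points x_1..x_n:
   entry ((j-1)n + l) is u_j(x_l) *)
Definition sample (d a n : nat) (x : 'I_n -> 'rV[R]_d) (u : 'rV[R]_d -> 'rV[R]_a)
  : 'cV[R]_(a * n) :=
  \col_(k < a * n) u (x (nod k)) 0 (blk k).

Definition nodewise (a b n : nat) (F : 'rV[R]_a -> 'rV[R]_b) (v : 'cV[R]_(a * n))
  : 'cV[R]_(b * n) :=
  \col_(k < b * n) F (node v (nod k)) 0 (blk k).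

(* Jacobian (in the column-vector convention, size (b n) x (a n)) of the
   node-wise map  nodewise F  at v *)
Definition nodewiseJ (a b n : nat) (F : 'rV[R]_a -> 'rV[R]_b) (v : 'cV[R]_(a * n))
  : 'M[R]_(b * n, a * n) :=
  ('J (fun r : 'rV[R]_(a * n) => (nodewise F (r^T : 'cV[R]_(a * n)))^T) v^T)^T.

(* right time derivative of g at t equals v  (t ranges over [0, T_final)) *)
Definition rderiv (m : nat) (g : R -> 'rV[R]_m) (t : R) (v : 'rV[R]_m) : Prop :=
  (fun h : R => h^-1 *: (g (t + h) - g t)) @ (0 : R)^'+ --> v.

Definition linop (X : Type) (m : nat)
    (L : (X -> 'rV[R]_m) -> (X -> 'rV[R]_m)) : Prop :=
  forall (c : R) (u v : X -> 'rV[R]_m),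
    L (fun x => c *: u x + v x) = (fun x => c *: L u x + L v x).

Definition quadop (X : Type) (m : nat)
    (Q : (X -> 'rV[R]_m) -> (X -> 'rV[R]_m)) : Prop :=
  exists B : (X -> 'rV[R]_m) -> (X -> 'rV[R]_m) -> (X -> 'rV[R]_m),
    (forall u, linop (B u)) /\ (forall v, linop (fun u => B u v)) /\
    (forall w, Q w = B w w).

Definition opnorm_le (p q : nat) (M : 'M[R]_(p, q)) (c : R) : Prop :=
  forall v : 'rV[R]_p, norm2 (v *m M) <= c * norm2 v.

End Defs.

(* Main.v *)
Require Import Defs.
From HB Require Import structures.
From mathcomp Require Import all_boot all_order all_algebra.
From mathcomp Require Import all_classical all_reals all_analysis.
From mathcomp Require Import ring.
Import Order.TTheory GRing.Theory Num.Theory.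
Import numFieldNormedType.Exports.
Local Open Scope classical_set_scope.
Local Open Scope ring_scope.

Lemma nod_idx a n (j : 'I_a) (l : 'I_n) : nod (idx j l) = l.
Proof.
apply/val_inj => /=; rewrite modnMDl modn_small //.
Qed.
Lemma blk_idx a n (j : 'I_a) (l : 'I_n) : blk (idx j l) = j.
Proof.
apply/val_inj => /=; have n0 : (0 < n)%N by case: l => l /=; case: n => //.
by rewrite divnMDl // divn_small // addn0.
Qed.
Lemma idx_blk_nod a n (k : 'I_(a * n)) : idx (blk k) (nod k) = k.
Proof. by apply/val_inj => /=; rewrite -divn_eq. Qed.

Section Aux.
Variable R : realType.

Lemma diff_small (V W : normedModType R) (F : V -> W) (x : V) :
  differentiable F x -> forall eps, 0 < eps ->
  \forall u \near (0:V), `|F (x + u) - F x - 'd F x u| <= eps * `|u|.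
Proof.
move=> dF; have /eqaddoP H := diff_locally dF.
move=> eps he; have := H eps he; apply: filterS => u H1.
by rewrite [x + u]addrC -addrA -opprD; exact: H1. Qed.

Lemma rchain (V W : normedModType R) (g : R -> V) (F : V -> W) (t : R) (v : V) :
  (fun h : R => h^-1 *: (g (t + h) - g t)) @ (0:R)^'+ --> v ->
  differentiable F (g t) ->
  (fun h : R => h^-1 *: (F (g (t + h)) - F (g t))) @ (0:R)^'+ --> 'd F (g t) v.
Proof.
move=> Hg dF.
set q := fun h : R => h^-1 *: (g (t + h) - g t).
set D := fun h : R => g (t + h) - g t.
set e := fun u => F (g t + u) - F (g t) - 'd F (g t) u.
have -> : (fun h : R => h^-1 *: (F (g (t + h)) - F (g t))) =
   (fun h => 'd F (g t) (q h) + h^-1 *: e (D h)).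
  apply/funext => h; rewrite /q /e /D linearZ -scalerDr; congr (_ *: _).
  by rewrite subrKC subrKC.
rewrite -[X in _ --> X]addr0; apply: cvgD.
  apply: (cvg_comp _ _ Hg); exact: (diff_continuous dF).
apply/cvgr0Pnorm_lt => eps he.
have Hb : \forall h \near (0:R)^'+, `|q h| <= `|v| + 1.
  move/cvgr_dist_lt: (Hg) => /(_ _ ltr01); apply: filterS => h Hh.
  have : `|q h| <= `|v| + `|v - q h|.
    by rewrite -{1}(subKr v (q h)) ler_normB.
  move=> /le_trans; apply; rewrite lerD2l; exact: ltW.
have HD : D @ (0:R)^'+ --> 0.
  have -> : D = fun h => h *: q h.
    apply/funext => h; rewrite /q scalerA; have [->|h0] := eqVneq h 0.
      by rewrite /D addr0 subrr mul0r scale0r.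
    by rewrite mulfV // scale1r.
  rewrite -(scale0r v); apply: cvgZ => //.
  by apply: cvg_at_right_filter; apply: cvg_id.
have ep : 0 < eps / (`|v| + 2) by rewrite divr_gt0 // ltr_wpDl.
have Ho := @diff_small _ _ _ _ dF _ ep.
have Ho' := HD _ Ho.
near=> h.
have hp : 0 < h by near: h; exact: nbhs_right_gt.
have Hbh : `|q h| <= `|v| + 1 by near: h; exact: Hb.
have Hoh : `|e (D h)| <= eps / (`|v| + 2) * `|D h| by near: h; exact: Ho'.
rewrite normrZ normfV gtr0_norm //.
apply: (@le_lt_trans _ _ (eps / (`|v|+2) * `|q h|)).
  rewrite /q normrZ normfV gtr0_norm // mulrCA; apply: ler_wpM2l => //.
  by rewrite invr_ge0 ltW.
apply: (@le_lt_trans _ _ (eps / (`|v|+2) * (`|v|+1))).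
  by apply: ler_wpM2l => //; exact: ltW.
rewrite mulrAC ltr_pdivrMr ?ltr_wpDl// ltr_pM2l // ltrD2l ltr1n //.
Unshelve. all: by end_near. Qed.
Lemma dcoord m n (i : 'I_m) (j : 'I_n) (a w : 'M[R]_(m, n)) :
  'd (fun N : 'M[R]_(m, n) => N i j) a w = w i j.
Proof.
have @f : {linear 'M[R]_(m, n) -> R}.
  by exists (fun N : 'M[R]_(_, _) => N i j); do 2![eexists]; do ?[constructor];
     rewrite ?mxE// => ? *; rewrite ?mxE//; move=> ?; rewrite !mxE.
rewrite (_ : (fun _ => _) = f) //; rewrite diff_lin //; exact: coord_continuous.
Qed.

Lemma diff_coordwise m k (G : 'rV[R]_m -> 'rV[R]_k) (a : 'rV[R]_m) :
  (forall j, differentiable (fun r => G r 0 j) a) ->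
  differentiable G a /\ forall w, 'd G a w = \row_j 'd (fun r => G r 0 j) a w.
Proof.
move=> dG.
have EG : G = \sum_(j < k) (fun r => G r 0 j *: delta_mx 0 j).
  by rewrite fct_sumE; apply/funext => r; rewrite {1}(row_sum_delta (G r)).
have dG' : differentiable G a.
  by rewrite EG; apply: differentiable_sum => j; apply: differentiableZl.
split => // w.
rewrite -deriveE //.
rewrite [in LHS]EG derive_sum; last by move=> j; apply: diff_derivable; apply: differentiableZl.
rewrite [RHS]row_sum_delta; apply: eq_bigr => j _.
by rewrite deriveE ?diffZl // ?mxE //; apply: differentiableZl.
Qed.


Lemma nodewiseJ_mul a b n (F : 'rV[R]_a -> 'rV[R]_b) (v u : 'cV[R]_(a*n)) :
  (forall l, differentiable F (node v l)) ->
  nodewiseJ F v *m u =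
  \col_(k < b*n) ('d F (node v (nod k)) (node u (nod k))) 0 (blk k).
Proof.
move=> dF.
set G := fun r : 'rV[R]_(a*n) => (nodewise F (r^T))^T.
set P := fun (l : 'I_n) (r : 'rV[R]_(a*n)) => node r^T l.
have dP : forall l r, differentiable (P l) r /\ forall w, 'd (P l) r w = P l w.
  move=> l r.
  have Pc : forall j, (fun r => P l r 0 j) = (fun r => r 0 (idx j l)).
    by move=> j; apply/funext => r'; rewrite /P /node !mxE.
  have [d1 d2] := @diff_coordwise _ _ (P l) r
     (fun j => ltac:(rewrite Pc; exact: differentiable_coord)).
  split => // w; rewrite d2; apply/rowP => j; rewrite mxE Pc dcoord /P /node !mxE //.
have PvT : forall l, P l v^T = node v l by move=> l; rewrite /P trmxK.
have Gk : forall k, (fun r => G r 0 k) = (fun y : 'rV[R]_b => y 0 (blk k)) \o F \o P (nod k).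
  by move=> k; apply/funext => r; rewrite /G /nodewise !mxE.
have dGk : forall k, differentiable (fun r => G r 0 k) v^T.
  move=> k; rewrite Gk; apply: differentiable_comp; first exact: (dP _ _).1.
  apply: differentiable_comp; last exact: differentiable_coord.
  by rewrite PvT.
have [dG dGE] := @diff_coordwise _ _ G v^T dGk.
rewrite /nodewiseJ -/G -[u in LHS]trmxK -trmx_mul -deriveEjacobian // deriveE // dGE.
apply/colP => k; rewrite !mxE Gk.
have d1 := (dP (nod k) v^T).1.
have d2 : differentiable F (P (nod k) v^T) by rewrite PvT.
rewrite diff_comp //; last by apply: differentiable_comp => //; exact: differentiable_coord.
rewrite /= diff_comp //; last exact: differentiable_coord.
by rewrite /= dcoord (dP _ _).2 PvT /P trmxK.
Qed.
Lemma entry_le_norm2 p q (v : 'M[R]_(p, q)) i j : `|v i j| <= norm2 v.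
Proof.
rewrite /norm2 -sqrtr_sqr; apply: ler_wsqrtr.
rewrite (bigD1 i) //= (bigD1 j) //= -addrA lerDl.
apply: addr_ge0; first by apply: sumr_ge0 => *; exact: sqr_ge0.
by apply: sumr_ge0 => *; apply: sumr_ge0 => *; exact: sqr_ge0.
Qed.

Lemma norm2_le_entries p q (v : 'M[R]_(p, q)) e : 0 <= e ->
  (forall i j, `|v i j| <= e) -> norm2 v <= Num.sqrt (p * q)%:R * e.
Proof.
move=> e0 H; rewrite /norm2.
have -> : Num.sqrt (p * q)%:R * e = Num.sqrt ((p * q)%:R * e ^+ 2).
  by rewrite sqrtrM ?ler0n // sqrtr_sqr ger0_norm.
apply: ler_wsqrtr.
apply: (@le_trans _ _ (\sum_(i < p) \sum_(j < q) e ^+ 2)).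
  apply: ler_sum => i _; apply: ler_sum => j _.
  by rewrite -real_normK ?num_real // lerXn2r ?nnegrE.
by rewrite !sumr_const !card_ord -mulr_natr -mulr_natr natrM; rewrite le_eqVlt; apply/orP; left; apply/eqP; ring.
Qed.
End Aux.

Theorem lemma1 (R : realType) (d ds dw : nat) (Hdim : (ds <= dw)%N)
  (Omega : set 'rV[R]_d) (Tf : R) (HTf : 0 < Tf)
  (Sj : 'I_ds -> set R)
  (s : 'rV[R]_d -> R -> 'rV[R]_ds)
  (f : ('rV[R]_d -> 'rV[R]_ds) -> 'rV[R]_d -> 'rV[R]_ds)
  (T : 'rV[R]_ds -> 'rV[R]_dw) (W : set 'rV[R]_dw)
  (Tdag : 'rV[R]_dw -> 'rV[R]_ds)
  (a h : ('rV[R]_d -> 'rV[R]_dw) -> 'rV[R]_d -> 'rV[R]_dw)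
  (p : R)
  (x : forall n : nat, 'I_n -> 'rV[R]_d)
  (fD : forall n : nat, 'cV[R]_(ds * n) -> 'cV[R]_(ds * n))
  (A : forall n : nat, 'M[R]_(dw * n, dw * n))
  (H : forall n : nat, 'M[R]_(dw * n, (dw * n) * (dw * n)))
  (* s is an S-valued solution of ds/dt = f(s) on Omega x [0, T_final) *)
  (Hs_in : forall y t, Omega y -> 0 <= t < Tf -> forall j, Sj j (s y t 0 j))
  (Hs_pde : forall y t, Omega y -> 0 <= t < Tf ->
     rderiv (fun tau => s y tau) t (f (fun z => s z t) y))
  (* quadratic lifting T : S -> W *)
  (HT_W : forall r : 'rV[R]_ds, (forall j, Sj j (r 0 j)) -> W (T r))
  (HT_diff : forall r : 'rV[R]_ds, (forall j, Sj j (r 0 j)) -> differentiable T r)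
  (HT_J : exists c : R, 0 < c /\
     forall r : 'rV[R]_ds, (forall j, Sj j (r 0 j)) -> opnorm_le ('J T r) c)
  (Ha : linop a) (Hh : quadop h)
  (Hlift : forall y t, Omega y -> 0 <= t < Tf ->
     rderiv (fun tau => T (s y tau)) t
       (a (fun z => T (s z t)) y + h (fun z => T (s z t)) y))
  (* reverse lifting map *)
  (Hdag_diff : forall w, W w -> differentiable Tdag w)
  (Hdag_bd : exists c' : R, forall w, W w -> opnorm_le ('J Tdag w) c')
  (Hdag_inv : forall r : 'rV[R]_ds, (forall j, Sj j (r 0 j)) -> Tdag (T r) = r)
  (* grid points *)
  (Hx : forall n (l : 'I_n), Omega (x n l))
  (* f_n : S^n -> S^n Lipschitz *)
  (HfD_S : forall n (v : 'cV[R]_(ds * n)), (forall j l, Sj j (v (idx j l) 0)) ->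
     forall j l, Sj j (fD n v (idx j l) 0))
  (HfD_lip : forall n, exists L : R, forall u v : 'cV[R]_(ds * n),
     (forall j l, Sj j (u (idx j l) 0)) -> (forall j l, Sj j (v (idx j l) 0)) ->
     norm2 (fD n u - fD n v) <= L * norm2 (u - v))
  (* consistency of order p of the discretization of ds/dt = f(s) *)
  (Hcons_s : exists cs : R, 0 < cs /\ forall n, (0 < n)%N ->
     forall t, 0 <= t < Tf -> forall (j : 'I_ds) (l : 'I_n),
       `| fD n (sample (x n) (fun z => s z t)) (idx j l) 0
          - f (fun z => s z t) (x n l) 0 j | <= cs * (n%:R `^ (- p)))
  (* consistency of order p of the discretization of dw/dt = a(w) + h(w) *)
  (Hcons_w : exists cw : R, 0 < cw /\ forall n, (0 < n)%N ->
     forall t, 0 <= t < Tf -> forall (j : 'I_dw) (l : 'I_n),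
       `| (A n *m nodewise T (sample (x n) (fun z => s z t))
           + H n *m kron2 (nodewise T (sample (x n) (fun z => s z t)))) (idx j l) 0
          - (a (fun z => T (s z t)) (x n l) + h (fun z => T (s z t)) (x n l)) 0 j |
         <= cw * (n%:R `^ (- p))) :
  exists C : R, forall n, (0 < n)%N -> forall t, 0 <= t < Tf ->
    norm2 (A n *m nodewise T (sample (x n) (fun z => s z t))
           + H n *m kron2 (nodewise T (sample (x n) (fun z => s z t)))
           - nodewiseJ T (nodewise Tdag (nodewise T (sample (x n) (fun z => s z t))))
             *m fD n (nodewise Tdag (nodewise T (sample (x n) (fun z => s z t)))))
      <= C * (n%:R `^ (2^-1 - p)).
Proof.
have [c [c0 Hc]] := HT_J.
have [cs [cs0 Hcs]] := Hcons_s.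
have [cw [cw0 Hcw]] := Hcons_w.
set K := cw + c * (Num.sqrt ds%:R * cs).
have K0 : 0 <= K.
  apply: addr_ge0; first exact: ltW.
  apply: mulr_ge0; first exact: ltW.
  apply: mulr_ge0; [exact: sqrtr_ge0 | exact: ltW].
exists (Num.sqrt dw%:R * K) => n n0 t ht.
set samp := sample (x n) (fun z => s z t).
have F1 : forall l, node samp l = s (x n l) t.
  by move=> l; apply/rowP => j; rewrite !mxE nod_idx blk_idx.
have F2 : forall l (j : 'I_ds), Sj j (node samp l 0 j).
  by move=> l j; rewrite F1; apply: Hs_in.
have F3 : forall l, node (nodewise T samp) l = T (s (x n l) t).
  by move=> l; apply/rowP => j; rewrite !mxE nod_idx blk_idx F1.
have F4 : nodewise Tdag (nodewise T samp) = samp.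
  apply/colP => k; rewrite !mxE F3 Hdag_inv; last by move=> j; apply: Hs_in.
  by [].
rewrite F4.
rewrite nodewiseJ_mul; last by move=> l; rewrite F1; apply: HT_diff; apply: Hs_in.
have CH : forall y, Omega y -> 'd T (s y t) (f (fun z => s z t) y) =
    a (fun z => T (s z t)) y + h (fun z => T (s z t)) y.
  move=> y Oy; have H0 := Hs_pde y t Oy ht; rewrite /rderiv in H0.
  have H1 := @rchain R _ _ _ _ _ _ H0 (HT_diff _ (Hs_in y t Oy ht)).
  have H2 := Hlift y t Oy ht; rewrite /rderiv in H2.
  exact: (cvg_unique _ H1 H2).
match goal with |- context [norm2 (?y - ?m)] => set Y := y; set M := m end.
have EY : Y = A n *m nodewise T samp + H n *m kron2 (nodewise T samp) by [].
clearbody Y.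
have np0 : 0 <= n%:R `^ (- p) :> R by apply: powR_ge0.
have Ent : forall (k : 'I_(dw * n)) (i : 'I_1), `|(Y - M) k i| <= K * n%:R `^ (- p).
  move=> k i; rewrite (ord1 i).
  rewrite -[k](idx_blk_nod _ _ k); move: (blk k) (nod k) => j l.
  rewrite /M !mxE nod_idx blk_idx F1.
  set e := f (s^~ t) (x n l) - node (fD n samp) l.
  have Ee : node (fD n samp) l = f (s^~ t) (x n l) - e by rewrite /e subKr.
  rewrite Ee linearB CH // mxE.
  rewrite [(- 'd T _ e) _ _]mxE; have -> : forall A B C : R, A - (B + - C) = (A - B) + C by move=> *; ring.
  apply: le_trans (ler_normD _ _) _; rewrite /K mulrDl; apply: lerD.
    rewrite EY; exact: Hcw.
  apply: le_trans (@entry_le_norm2 R _ _ _ 0 j) _.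
  have -> : 'd T (s (x n l) t) e = e *m 'J T (s (x n l) t) by rewrite /jacobian mul_rV_lin1.
  apply: le_trans (Hc _ (Hs_in _ _ (Hx n l) ht) e) _.
  rewrite -!mulrA; apply: ler_wpM2l; first exact: ltW.
  have := @norm2_le_entries R _ _ e (cs * n%:R `^ (- p)).
  rewrite mul1n mulrA; apply.
    by apply: mulr_ge0 => //; exact: ltW.
  move=> i' j'; rewrite (ord1 i') /e !mxE distrC; exact: Hcs.
apply: le_trans (@norm2_le_entries R _ _ (Y - M) _ (mulr_ge0 K0 np0) Ent) _.
have nn0 : n%:R != 0 :> R by rewrite pnatr_eq0 -lt0n.
rewrite muln1 natrM sqrtrM ?ler0n // powRD; last by apply/implyP => _.
rewrite powR12_sqrt ?ler0n //.
rewrite le_eqVlt; apply/orP; left; apply/eqP; ring.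
Qed.
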